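(* Let $G$ be a group and $s,t\in G$ with $s\neq t$. Then $\Phi(\langle s,t\rangle,\{s,t\})$ is complete bipartite (every vertex of $V_s$ is adjacent to every vertex of $V_t$) if and only if for every $x\in\langle s,t\rangle$ there exist $m,n\in\mathbb{Z}$ with $x=s^mt^n$.
   Context: For a group $K$ and $s\ne t$ in $K$, $\Phi(K,\{s,t\})$ is the multigraph with vertex set $V_s\cup V_t$, where $V_s=\{\langle s\rangle x : x\in K\}$ and $V_t=\{\langle t\rangle y: y\in K\}$ are the sets of right cosets, and with one edge labeled $g$ between $\langle s\rangle x$ and $\langle t\rangle y$ for each $g\in\langle s\rangle x\cap\langle t\rangle y$, and no other edges. *)

(* Defs.v *)
From Stdlib Require Import ZArith.

Record Group := {
  carrier :> Type;
  gmul : carrier -> carrier -> carrier;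
  gone : carrier;
  ginv : carrier -> carrier;
  gmulA : forall x y z, gmul x (gmul y z) = gmul (gmul x y) z;
  gmul1l : forall x, gmul gone x = x;
  gmul1r : forall x, gmul x gone = x;
  gmulVl : forall x, gmul (ginv x) x = gone;
  gmulVr : forall x, gmul x (ginv x) = gone
}.

Arguments gmul {g}.
Arguments gone {g}.
Arguments ginv {g}.

Fixpoint gpown {G : Group} (x : G) (n : nat) : G :=
  match n with
  | O => gone
  | S k => gmul x (gpown x k)
  end.

Definition gpow {G : Group} (x : G) (m : Z) : G :=
  match m with
  | Z0 => gone
  | Zpos p => gpown x (Pos.to_nat p)
  | Zneg p => ginv (gpown x (Pos.to_nat p))
  end.

Inductive gen2 {G : Group} (s t : G) : G -> Prop :=
  | gen2_s : gen2 s t s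
  | gen2_t : gen2 s t t
  | gen2_one : gen2 s t gone
  | gen2_mul : forall x y, gen2 s t x -> gen2 s t y -> gen2 s t (gmul x y)
  | gen2_inv : forall x, gen2 s t x -> gen2 s t (ginv x).

Definition rcoset {G : Group} (s x : G) : G -> Prop :=
  fun g => exists m : Z, g = gmul (gpow s m) x.

(* Phi(K,{s,t}) for a subgroup K (given as a predicate) containing s, t:
   vertices V_s = { <s>x : x in K }, V_t = { <t>y : y in K }; the edges between
   <s>x and <t>y are labelled by the elements g of <s>x ∩ <t>y. *)
Definition Phi_edge {G : Group} (K : G -> Prop) (s t x y g : G) : Prop :=
  K x /\ K y /\ rcoset s x g /\ rcoset t y g.

Definition Phi_complete_bipartite {G : Group} (K : G -> Prop) (s t : G) : Prop :=
  forall x y : G, K x -> K y -> exists g : G, Phi_edge K s t x y g.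

(* Main.v *)
Require Import Defs.
From Stdlib Require Import ZArith.

Lemma ginv_uniq (G : Group) (a b : G) : gmul a b = gone -> ginv a = b.
Proof.
  intros H. rewrite <- (gmul1r G (ginv a)). rewrite <- H.
  rewrite gmulA, gmulVl, gmul1l. reflexivity.
Qed.

Lemma ginv_inv (G : Group) (a : G) : ginv (ginv a) = a.
Proof. apply ginv_uniq. apply gmulVl. Qed.

Lemma gpow_opp (G : Group) (s : G) (m : Z) : gpow s (- m) = ginv (gpow s m).
Proof.
  destruct m; simpl.
  - symmetry. apply ginv_uniq. apply gmul1l.
  - reflexivity.
  - symmetry. apply ginv_inv.
Qed.

Lemma gpow_opp_l (G : Group) (s : G) (m : Z) : gmul (gpow s (- m)) (gpow s m) = gone.
Proof. rewrite gpow_opp. apply gmulVl. Qed.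

Theorem proposition4 (G : Group) (s t : G) (hst : s <> t) :
  Phi_complete_bipartite (gen2 s t) s t <->
  (forall x : G, gen2 s t x ->
     exists m n : Z, x = gmul (gpow s m) (gpow t n)).
Proof.
  split.
  - intros H x Hx.
    destruct (H x gone Hx (gen2_one s t)) as [g [_ [_ [[m Hm] [n Hn]]]]].
    exists (- m)%Z, n.
    rewrite gmul1r in Hn. rewrite <- Hn, Hm, gmulA, gpow_opp_l, gmul1l.
    reflexivity.
  - intros H x y Hx Hy.
    destruct (H (gmul x (ginv y)) (gen2_mul _ _ _ _ Hx (gen2_inv _ _ _ Hy)))
      as [a [b Hab]].
    exists (gmul (gpow s (- a)) x).
    split; [exact Hx|]. split; [exact Hy|]. split.
    + exists (- a)%Z. reflexivity.
    + exists b.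
      assert (Hx' : x = gmul (gmul (gpow s a) (gpow t b)) y).
      { rewrite <- Hab, <- gmulA, gmulVl, gmul1r. reflexivity. }
      rewrite Hx' at 1. rewrite <- gmulA, gmulA, gpow_opp_l, gmul1l. reflexivity.
Qed.
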